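(* Every $K$-Lusin Rothberger space is $\sigma$-compact.
   Context: All spaces are completely regular. A space is $K$-Lusin if it is an injective continuous image of a Lindelöf Čech-complete space. $X$ is Rothberger if for every sequence $(\mathcal{U}_n)_{n<\omega}$ of open covers there are $U_n\in\mathcal{U}_n$ such that $\{U_n:n<\omega\}$ covers $X$. *)

(* Defs.v *)
From HB Require Import structures.
From mathcomp Require Import all_boot all_order all_algebra.
From mathcomp Require Import all_classical all_reals all_analysis borel_hierarchy.
From mathcomp Require Import urysohn.
Set Implicit Arguments. Unset Strict Implicit. Unset Printing Implicit Defensive.
Import Order.TTheory GRing.Theory Num.Theory.
Local Open Scope classical_set_scope.

(* "completely regular" in the paper's standing convention = Tychonoff
   (completely regular + Hausdorff/T1) *)
Definition tychonoff_space (X : topologicalType) : Prop :=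
  completely_regular_space X /\ hausdorff_space X.

Definition open_cover (X : topologicalType) (C : set (set X)) : Prop :=
  (forall U, C U -> open U) /\ \bigcup_(U in C) U = setT.

Definition lindelof (X : topologicalType) : Prop :=
  forall C : set (set X), open_cover C ->
    exists D : set (set X), [/\ D `<=` C, countable D & \bigcup_(U in D) U = setT].

Definition embedding (X K : topologicalType) (e : X -> K) : Prop :=
  [/\ injective e, continuous e &
      forall U : set X, open U ->
        exists V : set K, open V /\ e @` U = range e `&` V].

(* Čech-complete: a Tychonoff space which is a G_delta in some
   (equivalently: every, e.g. the Stone-Čech) compactification *)
Definition cech_complete (X : topologicalType) : Prop :=
  tychonoff_space X /\
  exists (K : topologicalType) (e : X -> K),
    [/\ compact [set: K], hausdorff_space K, embedding e,
        dense (range e) & Gdelta (range e)].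

Definition K_Lusin (X : topologicalType) : Prop :=
  exists (Y : topologicalType) (f : Y -> X),
    [/\ lindelof Y, cech_complete Y, continuous f, injective f &
        range f = setT].

Definition rothberger (X : topologicalType) : Prop :=
  forall Us : nat -> set (set X), (forall n, open_cover (Us n)) ->
    exists U : nat -> set X,
      (forall n, Us n (U n)) /\ \bigcup_n U n = setT.

Definition sigma_compact (X : topologicalType) : Prop :=
  exists K : nat -> set X, (forall n, compact (K n)) /\ \bigcup_n K n = setT.

(* Main.v *)
Require Import Defs.
From mathcomp Require Import all_boot all_order.
From mathcomp Require Import all_classical all_reals all_analysis.
Set Implicit Arguments. Unset Strict Implicit. Unset Printing Implicit Defensive.
Local Open Scope classical_set_scope.

Section Gen.
Variable K : topologicalType.
Hypotheses (hK : hausdorff_space K) (cK : compact [set: K]).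

Lemma reg_nbhs (k : K) (U : set K) : nbhs k U ->
  exists W, [/\ nbhs k W, closed W & W `<=` U].
Proof.
move=> nU.
have nT : nbhs k [set: K] by exact: filterT.
have := @compact_regular K k setT hK cK nT.
move=> /(_ U nU) [V nV clVU].
exists (closure V); split => //; last exact: closed_closure.
by apply: filterS nV; exact: subset_closure.
Qed.

Lemma nested_inter (P : nat -> set K) :
  (forall n, closed (P n)) -> (forall n, P n !=set0) ->
  (forall n, P n.+1 `<=` P n) -> exists k, forall n, P n k.
Proof.
move=> clP neP decP.
have mono : forall i j, (i <= j)%N -> P j `<=` P i.
  move=> i j /subnK <-; elim: (j - i)%N => [|d IH] //=.
  by rewrite addSn; apply: subset_trans IH; exact: decP.
pose F := filter_from [set: nat] P.
have FF : Filter F.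
  apply: filter_from_filter; first by exists 0%N.
  move=> i j _ _; exists (maxn i j) => //.
  by move=> x Px; split; apply: (mono _ (maxn i j)) => //;
    rewrite ?leq_maxl ?leq_maxr.
have PF : ProperFilter F by apply: filter_from_proper => // i _; exact: neP.
have [k [_ clk]] := cK PF filterT.
exists k => n; apply: clP => B nB.
by apply: clk => //; exists n.
Qed.
End Gen.

Section Sc.
Variables (Y K : topologicalType) (e : Y -> K).
Hypotheses (linY : lindelof Y) (emb : embedding e).

Definition sc (S : set K) := exists F : set (set K), [/\ countable F,
  (forall C, F C -> compact C /\ C `<=` range e) & S `<=` \bigcup_(C in F) C].

Lemma sc_sub (S T : set K) : S `<=` T -> sc T -> sc S.
Proof. by move=> ST [F [cF HF TF]]; exists F; split => //; apply: subset_trans TF. Qed.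

Lemma sc0 : sc set0.
Proof. by exists set0; split => // C. Qed.

Lemma sc_compact (C : set K) : compact C -> C `<=` range e -> sc C.
Proof.
move=> cC CR; exists [set C]; split => //; first by move=> D ->.
by move=> x Cx; exists C.
Qed.

Lemma sc_bigcup (I : Type) (D : set I) (S : I -> set K) :
  countable D -> (forall i, D i -> sc (S i)) -> sc (\bigcup_(i in D) S i).
Proof.
move=> cD scS.
have /boolp.choice [F HF] : forall i, exists F : set (set K), D i -> [/\ countable F,
  (forall C, F C -> compact C /\ C `<=` range e) & S i `<=` \bigcup_(C in F) C].
  move=> i; case: (pselect (D i)) => Di.
    by have [F ?] := scS i Di; exists F.
  by exists set0.
exists (\bigcup_(i in D) F i); split.
- by apply: bigcup_countable => // i Di; case: (HF i Di).
- by move=> C [i Di FiC]; case: (HF i Di) => _ + _; apply.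
- move=> x [i Di Six]; case: (HF i Di) => _ _ /(_ x Six) [C FiC Cx].
  by exists C => //; exists i.
Qed.

Lemma sc_setU (A B : set K) : sc A -> sc B -> sc (A `|` B).
Proof.
move=> sA sB.
apply: (@sc_sub _ (\bigcup_(b in [set: bool]) (if b then A else B))).
  by move=> x [Ax|Bx]; [exists true|exists false].
by apply: sc_bigcup => // -[].
Qed.

Lemma sc_lindelof (Q : set K) : closed Q ->
  (forall k, Q k -> range e k -> exists W, nbhs k W /\ sc (W `&` Q `&` range e)) ->
  sc (Q `&` range e).
Proof.
move=> clQ HQ.
case: emb => einj econt eop.
have /boolp.choice [W HW] : forall y, exists W : set K, Q (e y) ->
    nbhs (e y) W /\ sc (W `&` Q `&` range e).
  move=> y; case: (pselect (Q (e y))) => Qy.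
    by have [W ?] := HQ _ Qy (imageT e y); exists W.
  by exists set0.
pose C := [set U : set Y | (exists2 y, Q (e y) & U = e @^-1` (interior (W y)))
   \/ U = ~` (e @^-1` Q)].
have oC : open_cover C.
  split.
    move=> U [[y Qy ->]|->].
      by apply: open_comp; [move=> x _; exact: econt | exact: open_interior].
    have -> : ~` (e @^-1` Q) = e @^-1` (~` Q) by [].
    apply: open_comp; first by move=> x _; exact: econt.
    by rewrite openC.
  apply/seteqP; split => // y _.
  case: (pselect (Q (e y))) => Qy.
    exists (e @^-1` interior (W y)); first by left; exists y.
    by have [] := HW y Qy.
  by exists (~` (e @^-1` Q)) => //; right.
have [D [DC cD DT]] := linY oC.
apply: (@sc_sub _ (\bigcup_(U in D) (e @` U `&` Q))).
  move=> k [Qk [y _ eyk]]; subst k.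
  have : [set: Y] y by [].
  rewrite -DT => -[U DU Uy]; exists U => //; split => //; exact: imageP.
apply: sc_bigcup => // U DU.
case: (DC U DU) => [[y Qy ->]|->].
  apply: (@sc_sub _ (W y `&` Q `&` range e)); last by have [] := HW y Qy.
  move=> _ [[u ieu <-] Qeu]; split; [split => // | exact: imageT].
  exact: nbhs_singleton.
apply: (@sc_sub _ set0); last exact: sc0.
by move=> _ [[u nu <-] Qu].
Qed.

Lemma compact_pre (C : set K) : compact C -> C `<=` range e -> compact (e @^-1` C).
Proof.
move=> cC CR F PF FC.
case: emb => einj econt eop.
have [k [Ck clk]] := cC (e @ F) (fmap_proper_filter e PF) FC.
have [y _ eyk] := CR k Ck.
exists y; split; first by rewrite /= eyk.
move=> A B FA nB.
move: nB; rewrite nbhsE => -[U [oU Uy] UB].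
have [V [oV eUV]] := eop U oU.
have Vk : V k.
  have : (e @` U) (e y) by exists y.
  by rewrite eUV => -[_]; rewrite eyk.
have nV : nbhs k V by apply: open_nbhs_nbhs.
have FeA : F (e @^-1` (e @` A)).
  by apply: filterS FA => a Aa /=; exists a.
have [_ [[a Aa <-] Vea]] := clk _ _ FeA nV.
have : (e @` U) (e a) by rewrite eUV; split => //; exists a.
move=> [u Uu /einj ua]; subst u.
by exists a; split => //; exact: UB.
Qed.
End Sc.

Fixpoint piece (K : Type) (spl : set K * nat -> set K * set K) (s : seq bool) : set K :=
  match s with
  | [::] => setT
  | b :: s' => (if b then snd else fst) (spl (piece spl s', size s'))
  end.

Fixpoint pref (beta : nat -> bool) (n : nat) : seq bool :=
  if n is n'.+1 then beta n' :: pref beta n' else [::].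

Lemma size_pref beta n : size (pref beta n) = n.
Proof. by elim: n => //= n ->. Qed.

Section Split.
Variables (Y K : topologicalType) (e : Y -> K).
Hypotheses (hK : hausdorff_space K) (cK : compact [set: K]).
Hypotheses (linY : lindelof Y) (emb : embedding e).
Variable G : nat -> set K.
Hypotheses (oG : forall n, open (G n)) (RG : range e = \bigcap_n G n).

Definition good (Q : set K) := closed Q /\ ~ sc e (Q `&` range e).

Lemma RGn n : range e `<=` G n.
Proof. by rewrite RG => x /(_ n I). Qed.

Lemma split_good (Q : set K) n : good Q -> exists Q0 Q1 : set K,
  [/\ good Q0, good Q1, Q0 `<=` Q `&` G n, Q1 `<=` Q `&` G n & Q0 `&` Q1 = set0].
Proof.
move=> [clQ nscQ].
pose bad k := [/\ Q k, range e k & forall W, nbhs k W -> closed W ->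
  ~ sc e (W `&` Q `&` range e)].
have notbad : forall k, Q k -> range e k -> ~ bad k ->
    exists W, nbhs k W /\ sc e (W `&` Q `&` range e).
  move=> k Qk Rk nb; apply: contrapT => nex; apply: nb; split => // W nW _ scW.
  by apply: nex; exists W.
case: (pselect (exists k0 k1, [/\ bad k0, bad k1 & k0 <> k1])).
  move=> [k0 [k1 [[Qk0 Rk0 b0] [Qk1 Rk1 b1] k01]]].
  have hK' := hK; rewrite open_hausdorff in hK'.
  have /hK' [[A B] /= [Ak0 Bk1] [oA oB /eqP AB0]] : k0 != k1 by apply/eqP.
  rewrite !inE in Ak0 Bk1.
  have nA : nbhs k0 (A `&` G n).
    by apply: filterI; apply: open_nbhs_nbhs; split => //; exact: RGn.
  have nB : nbhs k1 (B `&` G n).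
    by apply: filterI; apply: open_nbhs_nbhs; split => //; exact: RGn.
  have [W0 [nW0 clW0 W0A]] := reg_nbhs hK cK nA.
  have [W1 [nW1 clW1 W1B]] := reg_nbhs hK cK nB.
  exists (W0 `&` Q), (W1 `&` Q); split.
  - by split; [exact: closedI | exact: b0].
  - by split; [exact: closedI | exact: b1].
  - by move=> x [/W0A [_ ?] ?].
  - by move=> x [/W1B [_ ?] ?].
  - apply/seteqP; split => // x [[/W0A [Ax _] _] [/W1B [Bx _] _]].
    by rewrite -AB0; split.
move=> nA; exfalso; apply: nscQ.
case: (pselect (exists k0, bad k0)); last first.
  move=> nb; apply: sc_lindelof => // k Qk Rk; apply: notbad => // bk.
  by apply: nb; exists k.
move=> [k0 bk0].
have onlyk0 : forall k, bad k -> k = k0.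
  move=> k bk; apply: contrapT => kk0; apply: nA; by exists k, k0; split.
have Rk0 : range e k0 by case: bk0.
have /boolp.choice [W HW] : forall m, exists W, [/\ nbhs k0 W, closed W & W `<=` G m].
  move=> m; apply: reg_nbhs => //; apply: open_nbhs_nbhs; split => //.
  exact: RGn.
pose Q' m := Q `&` ~` interior (W m).
have scQ' : forall m, sc e (Q' m `&` range e).
  move=> m; apply: sc_lindelof => //.
    by apply: closedI => //; apply: open_closedC; exact: open_interior.
  move=> z [Qz nWz] Rz.
  have nbz : ~ bad z.
    by move=> /onlyk0 zk0; apply: nWz; rewrite zk0; case: (HW m).
  have [W' [nW' scW']] := notbad z Qz Rz nbz.
  exists W'; split => //; apply: sc_sub scW'.
  by move=> x [[W'x [Qx _]] Rx].
pose Cp := Q `&` \bigcap_m W m.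
have clCp : closed Cp.
  by apply: closedI => //; apply: closed_bigI => m _; case: (HW m).
have scCp : sc e Cp.
  apply: sc_compact; first exact: (subclosed_compact clCp cK).
  move=> x [_ Wx]; rewrite RG => m _; case: (HW m) => _ _; apply; exact: Wx m I.
apply: (sc_sub _ (sc_setU (sc_bigcup (D := [set: nat]) _ (fun m _ => scQ' m)) scCp)) => //.
move=> x [Qx Rx]; case: (pselect (forall m, interior (W m) x)) => H.
  by right; split => // m _; exact: nbhs_singleton (H m).
by left; move: H => /existsNP [m nm]; exists m => //; split => //; split.
Qed.

Hypothesis nsc : ~ sc e (range e).

Lemma cantor : exists D : nat -> bool -> set K,
  [/\ forall n b, compact (D n b) /\ D n b `<=` range e,
      forall n, D n false `&` D n true = set0 &
      forall beta : nat -> bool, exists k, forall n, D n (beta n) k].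
Proof.
have /boolp.choice [spl Hspl] : forall p : set K * nat, exists q : set K * set K,
  good p.1 -> [/\ good q.1, good q.2, q.1 `<=` p.1 `&` G p.2,
                  q.2 `<=` p.1 `&` G p.2 & q.1 `&` q.2 = set0].
  move=> [Q n]; case: (pselect (good Q)) => gQ; last by exists (set0, set0).
  by have [Q0 [Q1 H]] := split_good n gQ; exists (Q0, Q1).
have pgood : forall s, good (piece spl s).
  elim => [|b s IH]; first by split; [exact: closedT | rewrite setTI].
  by case: (Hspl (piece spl s, size s) IH) => g0 g1 _ _ _; case: b.
have psub : forall b s, piece spl (b :: s) `<=` piece spl s `&` G (size s).
  move=> b s; case: (Hspl (piece spl s, size s) (pgood s)) => _ _ s0 s1 _.
  by case: b.
have pdisj : forall s t, size s = size t -> s <> t ->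
    piece spl s `&` piece spl t = set0.
  elim => [|b s IH] [|c t] //; try by move=> _ /(_ erefl).
  move=> /= [st] neq.
  case: (pselect (s = t)) => [est|nst].
    subst t.
    have bc : b <> c by move=> bc; apply: neq; rewrite bc.
    case: (Hspl (piece spl s, size s) (pgood s)) => _ _ _ _ d.
    by case: b c bc {neq} => -[] //= _; rewrite // setIC.
  rewrite -(IH t st nst); apply/seteqP; split => x [].
    by move=> /psub [? _] /psub [? _].
  by move=> ? ?; exfalso; have : (set0 : set K) x by rewrite -(IH t st nst).
pose E m b := \bigcup_(t in [set: m.-tuple bool]) piece spl (b :: tval t).
have clE : forall m b, closed (E m b).
  move=> m b; apply: closed_bigcup; first exact: finite_finset.
  by move=> t _; case: (pgood (b :: tval t)).
have EG : forall m b, E m b `<=` G m.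
  move=> m b x [t _ /psub [_]]; by rewrite size_tuple.
have Edisj : forall m, E m false `&` E m true = set0.
  move=> m; apply/seteqP; split => // x [[t _ p0] [t' _ p1]].
  have H : piece spl (false :: tval t) `&` piece spl (true :: tval t') = set0.
    by apply: pdisj => //=; rewrite !size_tuple.
  by rewrite -H; split.
pose Cn := \bigcap_m (E m false `|` E m true).
have clCn : closed Cn.
  by apply: closed_bigI => m _; apply: closedU.
have CnR : Cn `<=` range e.
  by move=> x Cx; rewrite RG => m _; case: (Cx m I) => /EG.
exists (fun m b => Cn `&` E m b); split.
- move=> m b; split; last by move=> x [/CnR].
  exact: (subclosed_compact (closedI clCn (clE m b)) cK).
- move=> m; apply/seteqP; split => // x [[_ ?] [_ ?]].
  by rewrite -(Edisj m); split.
move=> beta.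
have [k Hk] : exists k, forall n, piece spl (pref beta n) k.
  apply: (nested_inter cK).
  - by move=> n; case: (pgood (pref beta n)).
  - move=> n; case: (pgood (pref beta n)) => _ ns; apply: contrapT => ne.
    apply: ns; apply: (sc_sub _ (sc0 e)) => x [Qx _]; apply: ne; by exists x.
  - by move=> n x /psub [].
have inE' : forall n, E n (beta n) k.
  move=> n; have tP : size (pref beta n) == n by rewrite size_pref.
  by exists (Tuple tP) => //; exact: (Hk n.+1).
exists k => n; split; last exact: inE'.
by move=> m _; case: (beta m) (inE' m) => H; [right|left].
Qed.
End Split.

Theorem corollary3p34 (X : topologicalType) :
  tychonoff_space X -> K_Lusin X -> rothberger X -> sigma_compact X.
Proof.
move=> [_ hX] [Y [f [linY [_ [K [e [cK hK emb _ [G oG RG]]]]] fcont finj frng]]] roth.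
pose img (C : set K) := f @` (e @^-1` C).
have imgc : forall C, compact C -> C `<=` range e -> compact (img C).
  move=> C cC CR; rewrite /img.
  apply: (@continuous_compact Y X f (e @^-1` C) (continuous_subspaceT (A := e @^-1` C) fcont)).
  exact: (compact_pre emb cC CR).
have imgcl : forall C, compact C -> C `<=` range e -> closed (img C).
  by move=> C cC CR; apply: compact_closed => //; exact: imgc.
case: (pselect (sc e (range e))) => [[F [cF HF RF]] | nsc].
  have /countable_injP [code hcode] := cF.
  pose Kx n := \bigcup_(C in [set C | F C /\ code C = n]) img C.
  exists Kx; split.
    move=> n; case: (pselect (exists C, F C /\ code C = n)) => [[C [FC cC]]|nC].
      have -> : Kx n = img C.
        apply/seteqP; split => [y [C' [FC' cC'] iy]|y iy]; last by exists C.
        have eC : C' = C.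
          have := hcode C' C; rewrite !inE => /(_ FC' FC); apply.
          by rewrite cC cC'.
        by rewrite -eC.
      by case: (HF C FC) => ? ?; exact: imgc.
    have -> : Kx n = set0.
      by apply/seteqP; split => // y [C' [FC' cC'] _]; apply: nC; exists C'.
    exact: compact0.
  apply/seteqP; split => // y _.
  have : range f y by rewrite frng.
  move=> [x _ <-].
  have [C FC Cex] := RF (e x) (imageT e x).
  by exists (code C) => //; exists C => //; exists x.
have [D [DcR Ddisj Dbr]] := cantor hK cK linY emb oG RG nsc.
pose Us n := [set U : set X | U = ~` img (D n false) \/ U = ~` img (D n true)].
have oUs : forall n, open_cover (Us n).
  move=> n; split.
    move=> U [->|->]; rewrite openC.
      by case: (DcR n false) => ? ?; apply: imgcl.
    by case: (DcR n true) => ? ?; apply: imgcl.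
  apply/seteqP; split => // y _.
  case: (pselect (img (D n false) y)) => [[x1 D1 fx1]|n1]; last first.
    by exists (~` img (D n false)) => //; left.
  exists (~` img (D n true)); first by right.
  move=> [x2 D2 fx2]; subst y; have x12 := finj _ _ fx2; subst x2.
  have : (D n false `&` D n true) (e x1) by split.
  by rewrite Ddisj.
have [U [UU cU]] := roth Us oUs.
have /boolp.choice [beta Hb] : forall n, exists b, U n = ~` img (D n b).
  by move=> n; case: (UU n) => ->; [exists false|exists true].
have [k Hk] := Dbr beta.
have [x _ exk] := (DcR 0%N (beta 0%N)).2 k (Hk 0%N).
have : [set: X] (f x) by [].
rewrite -cU => -[n _]; rewrite Hb => H.
have Hi : img (D n (beta n)) (f x) by exists x => //=; rewrite exk.
exfalso; exact: (H Hi).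
Qed.
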